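(* Let $m>2$ and $\beta\in(0,1)$. (a) There exist $b>0$ and $\chi\in C^\infty((-\infty,b))$ with $\chi(s)=0$ for all $s\le0$ and $\chi(s)\to+\infty$ as $s\to b^-$, such that $$\frac{m-2}{m}\left(\frac{\chi''(s)}{\left[(1+\chi'(s))^m-(1+\chi'(s))\right]^{2/m}}\right)^{\frac{m}{m-2}}\le(\chi'(s))^\beta\quad\text{for all }s\in(0,b).$$ (b) There exists $\xi\in C^\infty(\mathbb{R})$ with $\xi(s)=s$ for all $s\le0$ and $\xi(s)$ increasing to some limit $M>0$ as $s\to+\infty$, such that $$\frac{m-2}{m}\left(\frac{-\xi''(s)}{\left[\xi'(s)-(\xi'(s))^m\right]^{2/m}}\right)^{\frac{m}{m-2}}\le(1-\xi'(s))^\beta\quad\text{for all }s\in(0,+\infty).$$ *)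

(* Defs.v *)
From Stdlib Require Import Reals.
From Coquelicot Require Import Coquelicot.
Open Scope R_scope.

(* Real power x^y for a nonnegative base x and real exponent y > 0:
   0^y = 0 and x^y = exp (y ln x) for x > 0.  (Only ever applied to bases
   which the statement separately requires to be >= 0.) *)
Definition rpow (x y : R) : R := if Rle_dec x 0 then 0 else Rpower x y.

Definition smooth_on (f : R -> R) (U : R -> Prop) : Prop :=
  forall (n : nat) (x : R), U x -> ex_derive_n f n x.

(* Main.v *)
Require Import Defs.
From Stdlib Require Import Reals Lra Lia.
From Coquelicot Require Import Coquelicot.
Open Scope R_scope.


Definition openS (U : R -> Prop) :=
  forall x, U x -> exists e, 0 < e /\ forall y, Rabs (y - x) < e -> U y.

Lemma ball_R x e y : ball x e y <-> Rabs (y - x) < e.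
Proof. reflexivity. Qed.

Lemma openS_loc U x P : openS U -> U x -> (forall y, U y -> P y) -> locally x P.
Proof.
  intros HU Ux HP. destruct (HU x Ux) as [e [He H]].
  exists (mkposreal e He). intros y Hy. apply HP, H. exact Hy.
Qed.

Definition Cn (U : R -> Prop) (n : nat) (f : R -> R) :=
  forall k x, (k <= n)%nat -> U x -> ex_derive_n f k x.

Lemma Cn_S U n f : (forall x, U x -> ex_derive f x) -> Cn U n (Derive f) -> Cn U (S n) f.
Proof.
  intros H1 H2 k x Hk Ux. destruct k as [|k]. exact I.
  destruct k as [|k]. simpl. apply H1; auto.
  assert (E: forall y, Derive_n f (S k) y = Derive_n (Derive f) k y).
  { intros y. replace (S k) with (k+1)%nat by lia. rewrite <- (Derive_n_comp f k 1). reflexivity. }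
  simpl ex_derive_n.
  eapply ex_derive_ext. intros y; symmetry; apply E.
  specialize (H2 (S k) x ltac:(lia) Ux). exact H2.
Qed.

Lemma Cn_S_inv U n f : Cn U (S n) f -> (forall x, U x -> ex_derive f x) /\ Cn U n (Derive f).
Proof.
  intros H. split.
  - intros x Ux. apply (H 1%nat x); auto; lia.
  - intros k x Hk Ux. destruct k as [|k]. exact I.
    assert (E: forall y, Derive_n f (S k) y = Derive_n (Derive f) k y).
    { intros y. replace (S k) with (k+1)%nat by lia. rewrite <- (Derive_n_comp f k 1). reflexivity. }
    simpl ex_derive_n. eapply ex_derive_ext. intros y; apply E.
    exact (H (S (S k)) x ltac:(lia) Ux).
Qed.

Lemma Cn_0 U f : Cn U 0 f.
Proof. intros k x Hk _. assert (k = 0%nat) by lia. subst. exact I. Qed.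

Lemma Cn_ext U n f g : openS U -> (forall x, U x -> f x = g x) -> Cn U n f -> Cn U n g.
Proof.
  intros HU. revert f g. induction n; intros f g Hfg Hf. apply Cn_0.
  apply Cn_S_inv in Hf. destruct Hf as [H1 H2]. apply Cn_S.
  - intros x Ux. eapply ex_derive_ext_loc; [|apply H1; auto].
    apply (openS_loc U x); auto.
  - apply (IHn (Derive f)); auto.
    intros x Ux. apply Derive_ext_loc. apply (openS_loc U x); auto.
Qed.

Lemma Cn_plus U n f g : openS U -> Cn U n f -> Cn U n g -> Cn U n (fun x => f x + g x).
Proof.
  intros HU. revert f g. induction n; intros f g Hf Hg. apply Cn_0.
  apply Cn_S_inv in Hf. apply Cn_S_inv in Hg.
  destruct Hf as [F1 F2], Hg as [G1 G2]. apply Cn_S.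
  - intros x Ux. apply (ex_derive_plus f g); auto.
  - apply (Cn_ext U n (fun x => Derive f x + Derive g x)); auto.
    intros x Ux. rewrite Derive_plus; auto.
Qed.

Lemma Cn_mult U n f g : openS U -> Cn U n f -> Cn U n g -> Cn U n (fun x => f x * g x).
Proof.
  intros HU. revert f g. induction n; intros f g Hf Hg. apply Cn_0.
  assert (Hf' := Hf); assert (Hg' := Hg).
  apply Cn_S_inv in Hf. apply Cn_S_inv in Hg.
  destruct Hf as [F1 F2], Hg as [G1 G2]. apply Cn_S.
  - intros x Ux. apply (ex_derive_mult f g); auto.
  - apply (Cn_ext U n (fun x => Derive f x * g x + f x * Derive g x)); auto.
    + intros x Ux. rewrite Derive_mult; auto.
    + apply Cn_plus; auto.
      * apply IHn; auto. intros k x Hk Ux. apply Hg'; auto; lia.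
      * apply IHn; auto. intros k x Hk Ux. apply Hf'; auto; lia.
Qed.

Lemma Cn_const U n c : openS U -> Cn U n (fun _ => c).
Proof.
  intros HU. revert c. induction n; intros c. apply Cn_0. apply Cn_S.
  - intros; apply ex_derive_const.
  - apply (Cn_ext U n (fun _ => 0)); auto. intros x _. symmetry. apply Derive_const.
Qed.

Lemma Cn_id U n : openS U -> Cn U n (fun x => x).
Proof.
  intros HU. destruct n. apply Cn_0. apply Cn_S.
  - intros; apply ex_derive_id.
  - apply (Cn_ext U n (fun _ => 1)); auto. intros x _. symmetry. apply Derive_id.
    apply Cn_const; auto.
Qed.

Lemma Cn_le U n m f : (m <= n)%nat -> Cn U n f -> Cn U m f.
Proof. intros Hmn H k x Hk Ux. apply H; auto; lia. Qed.

Lemma Cn_sub U V n f : (forall x, V x -> U x) -> Cn U n f -> Cn V n f.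
Proof. intros HVU H k x Hk Vx. apply H; auto. Qed.

Lemma Cn_comp U V n f g : openS U -> openS V -> (forall x, U x -> V (g x)) ->
  Cn V n f -> Cn U n g -> Cn U n (fun x => f (g x)).
Proof.
  intros HU HV Hg. revert f. induction n; intros f Hf Hgn. apply Cn_0.
  assert (Hf' := Hf); assert (Hg' := Hgn).
  apply Cn_S_inv in Hf. apply Cn_S_inv in Hgn.
  destruct Hf as [F1 F2], Hgn as [G1 G2]. apply Cn_S.
  - intros x Ux. apply (ex_derive_comp f g); auto.
  - apply (Cn_ext U n (fun x => Derive g x * Derive f (g x))); auto.
    + intros x Ux. rewrite (Derive_comp f g); auto.
    + apply Cn_mult; auto.
      apply IHn; auto. apply (Cn_le _ (S n)); auto.
Qed.

Lemma Cn_opp U n f : openS U -> Cn U n f -> Cn U n (fun x => - f x).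
Proof.
  intros HU Hf. apply (Cn_ext U n (fun x => (-1) * f x)); auto.
  intros; ring. apply Cn_mult; auto. apply Cn_const; auto.
Qed.

Definition smooth (U : R -> Prop) f := forall n, Cn U n f.

Lemma smooth_on_of U f : smooth U f -> forall n x, U x -> ex_derive_n f n x.
Proof. intros H n x Ux. apply (H n n x); auto. Qed.

Lemma openT : openS (fun _ => True).
Proof. intros x _. exists 1. split. lra. auto. Qed.

Lemma openPos : openS (fun x => 0 < x).
Proof. intros x Hx. exists x. split. auto. intros y Hy.
  apply Rabs_def2 in Hy. lra. Qed.

Lemma Cn_exp n : Cn (fun _ => True) n exp.
Proof.
  induction n. apply Cn_0. apply Cn_S.
  - intros x _. exists (exp x). apply is_derive_Reals. apply derivable_pt_lim_exp.
  - apply (Cn_ext _ n exp); auto. apply openT. intros x _. symmetry.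
    apply is_derive_unique. apply is_derive_Reals. apply derivable_pt_lim_exp.
Qed.

Lemma is_derive_Rinv x : 0 < x -> is_derive Rinv x (- (/ x * / x)).
Proof. intros Hx. auto_derive. lra. field. lra. Qed.

Lemma Cn_inv n : Cn (fun x => 0 < x) n Rinv.
Proof.
  induction n. apply Cn_0. apply Cn_S.
  - intros x Hx. eexists. apply is_derive_Rinv; auto.
  - apply (Cn_ext _ n (fun x => - (/ x * / x))). apply openPos.
    + intros x Hx. symmetry. apply is_derive_unique. apply is_derive_Rinv; auto.
    + apply Cn_opp. apply openPos. apply Cn_mult; auto. apply openPos.
Qed.

Lemma Cn_ln n : Cn (fun x => 0 < x) n ln.
Proof.
  destruct n. apply Cn_0. apply Cn_S.
  - intros x Hx. eexists. apply is_derive_ln; auto.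
  - apply (Cn_ext _ n Rinv). apply openPos.
    + intros x Hx. symmetry. apply is_derive_unique. apply is_derive_ln; auto.
    + apply Cn_inv.
Qed.

Lemma ball_lt x (e : posreal) y : ball x e y -> x - e < y < x + e.
Proof.
  intros H. apply ball_R in H. change (Rabs (y - x) < e) in H.
  apply Rabs_def2 in H. lra.
Qed.

Lemma exp_INR_mult k w : exp (INR k * w) = exp w ^ k.
Proof.
  induction k. simpl. rewrite Rmult_0_l. apply exp_0.
  rewrite S_INR. replace ((INR k + 1) * w) with (INR k * w + w) by ring.
  rewrite exp_plus, IHk. simpl. ring.
Qed.

Lemma pow_le_exp z k : 0 <= z -> z ^ k <= INR k ^ k * exp z.
Proof.
  intros Hz. destruct k as [|k]. simpl. rewrite Rmult_1_l.
  pose proof (exp_ineq1_le z). lra.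
  set (K := INR (S k)). assert (HK : 0 < K) by (apply lt_0_INR; lia).
  replace (exp z) with (exp (z / K) ^ S k).
  2: { rewrite <- exp_INR_mult. f_equal. unfold K. field. fold K. lra. }
  replace (z ^ S k) with (K ^ S k * (z / K) ^ S k).
  2: { rewrite <- Rpow_mult_distr. f_equal. field. lra. }
  apply Rmult_le_compat_l. apply pow_le; lra.
  apply pow_incr. split. apply Rdiv_le_0_compat; lra.
  pose proof (exp_ineq1_le (z / K)). lra.
Qed.

Inductive IsPoly : (R -> R) -> Prop :=
| P_const c : IsPoly (fun _ => c)
| P_id : IsPoly (fun y => y)
| P_plus P Q : IsPoly P -> IsPoly Q -> IsPoly (fun y => P y + Q y)
| P_mult P Q : IsPoly P -> IsPoly Q -> IsPoly (fun y => P y * Q y).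

Lemma poly_der P : IsPoly P -> exists P', IsPoly P' /\ forall y, is_derive P y (P' y).
Proof.
  induction 1.
  - exists (fun _ => 0). split. constructor. intros; apply is_derive_Reals, derivable_pt_lim_const.
  - exists (fun _ => 1). split. constructor. intros; apply is_derive_Reals, derivable_pt_lim_id.
  - destruct IHIsPoly1 as [P' [HP1 HP2]], IHIsPoly2 as [Q' [HQ1 HQ2]].
    exists (fun y => P' y + Q' y). split. constructor; auto.
    intros; apply (is_derive_plus P Q); auto.
  - destruct IHIsPoly1 as [P' [HP1 HP2]], IHIsPoly2 as [Q' [HQ1 HQ2]].
    exists (fun y => P' y * Q y + P y * Q' y). split. repeat constructor; auto.
    intros; apply (is_derive_mult P Q); auto. intros; apply Rmult_comm.
Qed.

Lemma poly_bound P : IsPoly P -> exists A N, 0 <= A /\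
  forall y, 0 <= y -> Rabs (P y) <= A * (1 + y) ^ N.
Proof.
  induction 1.
  - exists (Rabs c), 0%nat. split. apply Rabs_pos. intros; simpl; lra.
  - exists 1, 1%nat. split. lra. intros. simpl. rewrite Rabs_pos_eq; lra.
  - destruct IHIsPoly1 as [A1 [N1 [HA1 H1]]], IHIsPoly2 as [A2 [N2 [HA2 H2]]].
    exists (A1 + A2), (N1 + N2)%nat. split. lra. intros y Hy.
    eapply Rle_trans. apply Rabs_triang.
    assert (E1 : (1 + y) ^ N1 <= (1 + y) ^ (N1 + N2)) by (apply Rle_pow; [lra|lia]).
    assert (E2 : (1 + y) ^ N2 <= (1 + y) ^ (N1 + N2)) by (apply Rle_pow; [lra|lia]).
    specialize (H1 y Hy); specialize (H2 y Hy).
    assert (A1 * (1 + y) ^ N1 <= A1 * (1 + y) ^ (N1 + N2)) by (apply Rmult_le_compat_l; auto).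
    assert (A2 * (1 + y) ^ N2 <= A2 * (1 + y) ^ (N1 + N2)) by (apply Rmult_le_compat_l; auto).
    nra.
  - destruct IHIsPoly1 as [A1 [N1 [HA1 H1]]], IHIsPoly2 as [A2 [N2 [HA2 H2]]].
    exists (A1 * A2), (N1 + N2)%nat. split. nra. intros y Hy.
    rewrite Rabs_mult, pow_add.
    replace (A1 * A2 * ((1 + y) ^ N1 * (1 + y) ^ N2)) with
      ((A1 * (1 + y) ^ N1) * (A2 * (1 + y) ^ N2)) by ring.
    apply Rmult_le_compat; auto; apply Rabs_pos.
Qed.

Definition fl (P : R -> R) (s : R) : R :=
  if Rle_dec s 0 then 0 else P (/ s) * exp (- / s).

Lemma fl_der0 P : IsPoly P -> is_derive (fl P) 0 0.
Proof.
  intros HP. destruct (poly_bound P HP) as [A0 [N [HA0 HB0]]].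
  set (A := A0 + 1). assert (HA : 0 < A) by (unfold A; lra).
  assert (HB : forall y, 0 <= y -> Rabs (P y) <= A * (1 + y) ^ N).
  { intros y Hy. specialize (HB0 y Hy). assert (0 <= (1+y)^N) by (apply pow_le; lra).
    unfold A; nra. }
  clearbody A. clear HB0.
  set (C := INR (S (S N)) ^ (S (S N)) * exp 1).
  assert (HC : 0 < C). { unfold C. apply Rmult_lt_0_compat. apply pow_lt.
    apply lt_0_INR; lia. apply exp_pos. }
  apply is_derive_Reals. intros eps Heps.
  assert (Hd : 0 < eps / (A * C + 1)) by (apply Rdiv_lt_0_compat; nra).
  exists (mkposreal _ Hd). intros h Hh0 Hh. simpl in Hh.
  unfold fl. destruct (Rle_dec 0 0); [|lra]. rewrite Rplus_0_l.
  destruct (Rle_dec h 0).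
  { replace ((0 - 0) / h - 0) with 0 by (field; auto). rewrite Rabs_R0; auto. }
  assert (Hh' : 0 < h) by lra. rewrite Rabs_pos_eq in Hh by lra.
  set (y := / h). assert (Hy : 0 < y) by (unfold y; apply Rinv_0_lt_compat; lra).
  replace ((P y * exp (- y) - 0) / h - 0) with (P y * y * exp (- y)).
  2: { unfold y. field. lra. }
  assert (K : (1 + y) ^ (S (S N)) <= C * exp y).
  { unfold C. replace (exp y) with (exp (1 + y) * / exp 1).
    2: { rewrite exp_plus. field. apply Rgt_not_eq, exp_pos. }
    pose proof (pow_le_exp (1 + y) (S (S N)) ltac:(lra)).
    pose proof (exp_pos 1). 
    replace (INR (S (S N)) ^ S (S N) * exp 1 * (exp (1 + y) * / exp 1))
      with (INR (S (S N)) ^ S (S N) * exp (1 + y)) by (field; lra). lra. }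
  specialize (HB y ltac:(lra)).
  rewrite Rabs_mult, Rabs_mult, (Rabs_pos_eq y) by lra.
  rewrite (Rabs_pos_eq (exp (- y))) by (apply Rlt_le, exp_pos).
  assert (Hey : exp (- y) * exp y = 1). { rewrite <- exp_plus. replace (-y + y) with 0 by ring. apply exp_0. }
  assert (Hpos : 0 < exp y) by apply exp_pos.
  assert (Hpos' : 0 < exp (- y)) by apply exp_pos.
  assert (S1 : Rabs (P y) * y * exp (- y) <= A * (1 + y) ^ (S N) * exp (- y)).
  { simpl. apply Rmult_le_compat_r. lra.
    assert (0 <= (1+y)^N) by (apply pow_le; lra).
    apply Rle_trans with (A * (1 + y) ^ N * y). apply Rmult_le_compat_r; lra.
    nra. }
  assert (S2 : (1 + y) * ((1 + y) ^ (S N) * exp (- y)) <= C).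
  { replace ((1 + y) * ((1 + y) ^ (S N) * exp (- y))) with ((1 + y) ^ (S (S N)) * exp (- y)) by (simpl; ring).
    apply Rle_trans with (C * exp y * exp (-y)). apply Rmult_le_compat_r; lra.
    rewrite Rmult_assoc, (Rmult_comm (exp y)), Hey. lra. }
  assert (S3 : (1 + y) ^ (S N) * exp (- y) <= C * h).
  { assert (0 < 1 + y) by lra.
    apply Rmult_le_reg_l with (1 + y); auto.
    apply Rle_trans with C; auto. unfold y in *.
    replace ((1 + / h) * (C * h)) with (C * (h + 1)) by (field; lra). nra. }
  assert (0 <= (1 + y) ^ (S N) * exp (- y)) by (apply Rmult_le_pos; [apply pow_le|]; lra).
  apply Rle_lt_trans with (A * (C * h)).
  { eapply Rle_trans. apply S1. rewrite Rmult_assoc. apply Rmult_le_compat_l; lra. }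
  apply Rlt_le_trans with (A * C * (eps / (A * C + 1))).
  { rewrite <- Rmult_assoc. apply Rmult_lt_compat_l; auto. nra. }
  apply Rle_trans with ((A * C + 1) * (eps / (A * C + 1))).
  apply Rmult_le_compat_r; lra. right. field. nra.
Qed.

Lemma fl_der P : IsPoly P -> exists Q, IsPoly Q /\ forall s, is_derive (fl P) s (fl Q s).
Proof.
  intros HP. destruct (poly_der P HP) as [P' [HP' HD]].
  exists (fun y => (P y + -1 * P' y) * (y * y)). split.
  { repeat constructor; auto. }
  intros s. destruct (Rtotal_order s 0) as [Hs|[Hs|Hs]].
  - unfold fl at 2. destruct (Rle_dec s 0); [|lra].
    apply (is_derive_ext_loc (fun _ => 0)).
    + exists (mkposreal (-s) ltac:(lra)). intros y Hy. apply ball_lt in Hy. simpl in Hy.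
      unfold fl. destruct (Rle_dec y 0). reflexivity. lra.
    + apply is_derive_Reals, derivable_pt_lim_const.
  - subst. unfold fl at 2. destruct (Rle_dec 0 0); [|lra]. apply fl_der0; auto.
  - unfold fl at 2. destruct (Rle_dec s 0); [lra|].
    apply (is_derive_ext_loc (fun t => P (/ t) * exp (- / t))).
    + exists (mkposreal s Hs). intros y Hy. apply ball_lt in Hy. simpl in Hy.
      unfold fl. destruct (Rle_dec y 0); auto. lra.
    + assert (D1 : is_derive (fun t => P (/ t)) s (- (/ s * / s) * P' (/ s))).
      { apply (is_derive_comp P Rinv). apply HD. apply is_derive_Rinv; auto. }
      assert (D2 : is_derive (fun t => exp (- / t)) s ((/ s * / s) * exp (- / s))).
      { auto_derive. lra. field. lra. }
      eapply is_derive_ext. intros t; reflexivity.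
      replace ((P (/ s) + -1 * P' (/ s)) * (/ s * / s) * exp (- / s)) with
        ((- (/ s * / s) * P' (/ s)) * exp (- / s) + P (/ s) * ((/ s * / s) * exp (- / s))) by ring.
      apply (is_derive_mult (fun t => P (/ t)) (fun t => exp (- / t))); auto.
      intros; apply Rmult_comm.
Qed.

Lemma fl_Cn n : forall P, IsPoly P -> Cn (fun _ => True) n (fl P).
Proof.
  induction n; intros P HP. apply Cn_0.
  destruct (fl_der P HP) as [Q [HQ HD]]. apply Cn_S.
  - intros x _. eexists; apply HD.
  - apply (Cn_ext _ n (fl Q)). apply openT.
    intros x _. symmetry. apply is_derive_unique, HD.
    apply IHn; auto.
Qed.

Definition phi0 (s : R) : R := if Rle_dec s 0 then 0 else exp (- / s).

Lemma phi0_smooth n : Cn (fun _ => True) n phi0.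
Proof.
  apply (Cn_ext _ n (fl (fun _ => 1))). apply openT.
  intros x _. unfold fl, phi0. destruct (Rle_dec x 0); ring.
  apply fl_Cn. constructor.
Qed.

Lemma exp_le' x y : x <= y -> exp x <= exp y.
Proof. intros [H|H]. left; apply exp_increasing; auto. subst; lra. Qed.

Lemma rp_pos x e : 0 < Rpower x e.
Proof. apply exp_pos. Qed.

Lemma rp_exp_dec x a b : 0 < x <= 1 -> a <= b -> Rpower x b <= Rpower x a.
Proof.
  intros Hx Hab. unfold Rpower. apply exp_le'.
  assert (ln x <= 0). { rewrite <- ln_1. apply ln_le; lra. }
  nra.
Qed.

Lemma rp_exp_inc x a b : 1 <= x -> a <= b -> Rpower x a <= Rpower x b.
Proof. intros; apply Rle_Rpower; auto. Qed.

Lemma rp_base x y e : 0 <= e -> 0 < x <= y -> Rpower x e <= Rpower y e.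
Proof. intros; apply Rle_Rpower_l; auto. Qed.

Lemma rp_le_1plus A d : 0 < A -> 0 <= d <= 1 -> Rpower A d <= 1 + A.
Proof.
  intros HA Hd. destruct (Rle_dec A 1).
  - assert (Rpower A d <= Rpower A 0) by (apply rp_exp_dec; lra).
    rewrite Rpower_O in H; lra.
  - assert (Rpower A d <= Rpower A 1) by (apply rp_exp_inc; lra).
    rewrite Rpower_1 in H; lra.
Qed.

Lemma rpow_pos x e : 0 < x -> rpow x e = Rpower x e.
Proof. intros. unfold rpow. destruct (Rle_dec x 0); lra. Qed.

Lemma final_step (M beta num D B : R) :
  3 <= M -> 0 < beta < 1 -> 0 < D -> 0 < B -> 0 <= num ->
  num <= Rpower B (beta * (M - 2) / M) * Rpower D (2 / M) ->
  (M - 2) / M * rpow (num / rpow D (2 / M)) (M / (M - 2)) <= rpow B beta.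
Proof.
  intros HM Hb HD HB Hn Hle.
  rewrite (rpow_pos D) by auto. rewrite (rpow_pos B) by auto.
  pose proof (rp_pos D (2 / M)) as HDa.
  destruct Hn as [Hn|Hn].
  2: { subst. unfold Rdiv at 2. rewrite Rmult_0_l. unfold rpow.
       destruct (Rle_dec 0 0); [|lra]. rewrite Rmult_0_r. left; apply rp_pos. }
  assert (HX : 0 < num / Rpower D (2 / M)) by (apply Rdiv_lt_0_compat; auto).
  rewrite rpow_pos by auto.
  assert (H1 : num / Rpower D (2 / M) <= Rpower B (beta * (M - 2) / M)).
  { apply Rmult_le_reg_r with (Rpower D (2 / M)); auto.
    unfold Rdiv. rewrite Rmult_assoc, Rinv_l, Rmult_1_r; lra. }
  assert (H2 : Rpower (num / Rpower D (2 / M)) (M / (M - 2)) <=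
               Rpower (Rpower B (beta * (M - 2) / M)) (M / (M - 2))).
  { apply rp_base. apply Rlt_le, Rdiv_lt_0_compat; lra. split; auto. }
  rewrite Rpower_mult in H2.
  replace (beta * (M - 2) / M * (M / (M - 2))) with beta in H2 by (field; lra).
  pose proof (rp_pos (num / Rpower D (2 / M)) (M / (M - 2))).
  assert (0 <= (M - 2) / M <= 1). { split. apply Rdiv_le_0_compat; lra.
    apply Rmult_le_reg_r with M. lra. unfold Rdiv. rewrite Rmult_assoc, Rinv_l; lra. }
  nra.
Qed.

Definition gam (m : nat) (beta : R) := beta * (INR m - 2) / INR m + 2 / INR m.

Lemma INR_ge3 m : (2 < m)%nat -> 3 <= INR m.
Proof. intros H. replace 3 with (INR 3) by (simpl; ring). apply le_INR; lia. Qed.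

Lemma gam_bounds m beta : (2 < m)%nat -> 0 < beta < 1 ->
  2 / INR m <= gam m beta <= 1 /\ 0 < 1 - gam m beta.
Proof.
  intros Hm Hb. pose proof (INR_ge3 m Hm). unfold gam.
  assert (0 <= beta * (INR m - 2) / INR m).
  { apply Rdiv_le_0_compat; nra. }
  assert (E : 1 - (beta * (INR m - 2) / INR m + 2 / INR m) = (1 - beta) * (INR m - 2) / INR m)
    by (field; lra).
  rewrite E. assert (0 < (1 - beta) * (INR m - 2) / INR m) by (apply Rdiv_lt_0_compat; nra).
  lra.
Qed.

Lemma red_a m beta p q : (2 < m)%nat -> 0 < beta < 1 -> 0 < p -> 0 <= q ->
  q <= Rpower p (gam m beta) + p ^ 2 ->
  (INR m - 2) / INR m *
    rpow (q / rpow ((1 + p) ^ m - (1 + p)) (2 / INR m)) (INR m / (INR m - 2))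
  <= rpow p beta.
Proof.
  intros Hm Hb Hp Hq Hle.
  pose proof (INR_ge3 m Hm) as HM. pose proof (gam_bounds m beta Hm Hb) as [Hg1 Hg2].
  set (M := INR m) in *.
  destruct m as [|m']; [lia|].
  assert (HM' : M = INR m' + 1) by (unfold M; rewrite S_INR; ring).
  assert (Hpm : 1 + p <= (1 + p) ^ m') by (rewrite <- (pow_1 (1+p)) at 1; apply Rle_pow; [lra|lia]).
  assert (HD : p * (1 + p) ^ m' <= (1 + p) ^ S m' - (1 + p)) by (simpl; nra).
  assert (HDp : 0 < p * (1 + p) ^ m') by (apply Rmult_lt_0_compat; [lra| apply pow_lt; lra]).
  apply final_step; try lra.
  set (a := 2 / M). set (b' := beta * (M - 2) / M).
  assert (Ha : 0 <= a) by (unfold a; apply Rdiv_le_0_compat; lra).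
  assert (R1 : Rpower (p * (1 + p) ^ m') a <= Rpower ((1 + p) ^ S m' - (1 + p)) a)
    by (apply rp_base; lra).
  rewrite <- Rpower_mult_distr in R1 by (auto; apply pow_lt; lra).
  rewrite <- (Rpower_pow m' (1 + p)) in R1 by lra. rewrite Rpower_mult in R1.
  assert (R2 : Rpower p b' * (Rpower p a * Rpower (1 + p) (INR m' * a)) <=
               Rpower p b' * Rpower ((1 + p) ^ S m' - (1 + p)) a).
  { apply Rmult_le_compat_l; auto. left; apply rp_pos. }
  rewrite <- Rmult_assoc, <- Rpower_plus in R2.
  replace (b' + a) with (gam (S m') beta) in R2 by (unfold gam, b', a, M; ring).
  eapply Rle_trans; [|apply R2]. clear R1 R2.
  set (g := gam (S m') beta) in *.
  assert (Hma : 1 <= INR m' * a).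
  { unfold a. apply Rmult_le_reg_r with M. lra. unfold Rdiv.
    replace (INR m' * (2 * / M) * M) with (2 * INR m') by (field; lra). lra. }
  destruct (Rle_dec p 1).
  - assert (E1 : Rpower (1 + p) 1 <= Rpower (1 + p) (INR m' * a)) by (apply rp_exp_inc; lra).
    rewrite Rpower_1 in E1 by lra.
    assert (E2 : Rpower p 1 <= Rpower p g) by (apply rp_exp_dec; lra).
    rewrite Rpower_1 in E2 by lra.
    pose proof (rp_pos p g).
    assert (Rpower p g * (1 + p) <= Rpower p g * Rpower (1 + p) (INR m' * a))
      by (apply Rmult_le_compat_l; lra).
    assert (p * p <= p * Rpower p g) by (apply Rmult_le_compat_l; lra).
    simpl in Hle. assert (Rpower p g * (1 + p) = Rpower p g + p * Rpower p g) by ring. lra.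
  - assert (E1 : Rpower p a <= Rpower p g) by (apply rp_exp_inc; unfold a; lra).
    assert (E2 : Rpower p g <= Rpower p 1) by (apply rp_exp_inc; lra).
    rewrite Rpower_1 in E2 by lra.
    assert (E3 : Rpower (1 + p) (INR m' * a) = (1 + p) * Rpower (1 + p) (INR m' * a - 1)).
    { rewrite <- (Rpower_1 (1 + p)) at 2 by lra. rewrite <- Rpower_plus. f_equal; ring. }
    assert (E4 : Rpower p (INR m' * a - 1) <= Rpower (1 + p) (INR m' * a - 1))
      by (apply rp_base; lra).
    assert (E5 : Rpower p a * Rpower p (INR m' * a - 1) = p).
    { rewrite <- Rpower_plus. replace (a + (INR m' * a - 1)) with 1. apply Rpower_1; lra.
      unfold a. rewrite HM'. field. lra. }
    pose proof (rp_pos p a). pose proof (rp_pos p (INR m' * a - 1)).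
    pose proof (rp_pos (1 + p) (INR m' * a - 1)).
    rewrite E3.
    assert (Rpower p a * Rpower p (INR m' * a - 1) <= Rpower p a * Rpower (1 + p) (INR m' * a - 1))
      by (apply Rmult_le_compat_l; lra).
    set (X := Rpower (1 + p) (INR m' * a - 1)) in *.
    assert (Rpower p a * ((1 + p) * X) <= Rpower p g * ((1 + p) * X))
      by (apply Rmult_le_compat_r; nra).
    simpl in Hle. nra.
Qed.

Lemma red_b m beta r x2 : (2 < m)%nat -> 0 < beta < 1 -> 0 < r < 1 -> x2 <= 0 ->
  - x2 <= r * Rpower (1 - r) (gam m beta) ->
  (INR m - 2) / INR m *
    rpow (- x2 / rpow (r - r ^ m) (2 / INR m)) (INR m / (INR m - 2))
  <= rpow (1 - r) beta.
Proof.
  intros Hm Hb Hr Hx Hle.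
  pose proof (INR_ge3 m Hm) as HM. pose proof (gam_bounds m beta Hm Hb) as [Hg1 Hg2].
  set (M := INR m) in *.
  destruct m as [|[|k]]; try lia.
  assert (Hk : r ^ k <= 1) by (rewrite <- (pow1 k); apply pow_incr; lra).
  assert (HD : r * (1 - r) <= r - r ^ S (S k)) by (simpl; nra).
  assert (HDp : 0 < r * (1 - r)) by nra.
  apply final_step; try lra.
  set (a := 2 / M). set (b' := beta * (M - 2) / M).
  assert (Ha : 0 <= a <= 1) by (unfold a; split; [apply Rdiv_le_0_compat|
     apply Rmult_le_reg_r with M; [|unfold Rdiv; rewrite Rmult_assoc, Rinv_l]]; lra).
  assert (R1 : Rpower (r * (1 - r)) a <= Rpower (r - r ^ S (S k)) a) by (apply rp_base; lra).
  rewrite <- Rpower_mult_distr in R1 by lra.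
  assert (R0 : Rpower r 1 <= Rpower r a) by (apply rp_exp_dec; lra).
  rewrite Rpower_1 in R0 by lra.
  pose proof (rp_pos (1 - r) a). pose proof (rp_pos (1 - r) b').
  assert (R2 : r * Rpower (1 - r) a <= Rpower (r - r ^ S (S k)) a) by nra.
  assert (R3 : Rpower (1 - r) b' * (r * Rpower (1 - r) a) <=
               Rpower (1 - r) b' * Rpower (r - r ^ S (S k)) a) by (apply Rmult_le_compat_l; lra).
  assert (E : Rpower (1 - r) b' * (r * Rpower (1 - r) a) = r * Rpower (1 - r) (gam (S (S k)) beta)).
  { replace (gam (S (S k)) beta) with (b' + a) by (unfold gam, b', a, M; ring).
    rewrite Rpower_plus. ring. }
  lra.
Qed.

Lemma exp_neg_bound d y : 0 < d -> 0 < y -> exp (- (d * y)) <= 4 / (d * y) ^ 2.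
Proof.
  intros Hd Hy. pose proof (pow_le_exp (d * y) 2 ltac:(nra)) as H.
  simpl INR in H. replace (exp (- (d * y))) with (/ exp (d * y)) by (rewrite exp_Ropp; auto).
  pose proof (exp_pos (d * y)). assert (0 < (d * y) ^ 2) by (apply pow_lt; nra).
  apply Rmult_le_reg_r with (exp (d * y) * (d * y) ^ 2). nra.
  field_simplify; try lra.
Qed.

Lemma ineq_b dl T s : 0 < dl <= 1 -> T = 200 / dl ^ 2 -> 0 < s ->
  let E := exp (- (T / s)) in let c := / (2 * T) in let a := c * E in
  let u := 1 - T * a in let v := 1 + s * a in
  let r := u / v ^ 2 in
  let x2 := - (T ^ 2 * a * v / s ^ 2 + 2 * u * a * (1 + T / s)) / v ^ 3 in
  0 < r < 1 /\ x2 <= 0 /\ - x2 <= r * Rpower (1 - r) (1 - dl).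
Proof.
  intros Hd HT Hs E c a u v r x2.
  assert (HT1 : 200 <= T). { rewrite HT. apply Rmult_le_reg_r with (dl ^ 2). apply pow_lt; lra.
    unfold Rdiv. rewrite Rmult_assoc, Rinv_l. 2: { apply pow_nonzero; lra. } simpl; nra. }
  assert (HE : 0 < E < 1). { split. apply exp_pos. unfold E. rewrite <- exp_0. apply exp_increasing.
    assert (0 < T / s) by (apply Rdiv_lt_0_compat; lra). lra. }
  assert (Hc : T * c = / 2) by (unfold c; field; lra).
  assert (Hc0 : 0 < c) by (unfold c; apply Rinv_0_lt_compat; lra).
  assert (Ha : 0 < a) by (unfold a; nra).
  assert (HTa : T * a <= / 2) by (unfold a; rewrite <- Rmult_assoc, Hc; nra).
  assert (Hu : / 2 <= u < 1) by (unfold u; nra).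
  assert (Hv : 1 < v) by (unfold v; nra).
  assert (Hv2 : 1 < v ^ 2) by (simpl; nra).
  assert (Hr : 0 < r < 1). { unfold r. split. apply Rdiv_lt_0_compat; lra.
    apply Rmult_lt_reg_r with (v ^ 2). lra. unfold Rdiv. rewrite Rmult_assoc, Rinv_l; lra. }
  assert (HTs : 0 < T / s) by (apply Rdiv_lt_0_compat; lra).
  assert (Hv3 : 0 < v ^ 3) by (apply pow_lt; lra).
  assert (Hnum : 0 < T ^ 2 * a * v / s ^ 2 + 2 * u * a * (1 + T / s)).
  { assert (0 < T ^ 2 * a * v / s ^ 2) by (apply Rdiv_lt_0_compat; [simpl; repeat apply Rmult_lt_0_compat; lra | simpl; nra]).
    assert (0 < 2 * u * a * (1 + T / s)) by (repeat apply Rmult_lt_0_compat; lra). lra. }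
  assert (Hx2 : x2 <= 0). { unfold x2. apply Rmult_le_reg_r with (v ^ 3); auto.
    unfold Rdiv. rewrite Rmult_assoc, Rinv_l; lra. }
  split; [auto|split; [auto|]].
  set (t := 1 - r). assert (Ht : 0 < t < 1) by (unfold t; lra).
  set (y := T / s) in *.
  assert (B1 : - x2 <= 2 * a * (y + 1) ^ 2 / v ^ 2).
  { unfold x2. rewrite Ropp_div, Ropp_involutive.
    assert (E1 : T ^ 2 * a * v / s ^ 2 = a * v * y ^ 2) by (unfold y; field; lra).
    rewrite E1.
    apply Rmult_le_reg_r with (v ^ 3); auto. unfold Rdiv.
    rewrite Rmult_assoc, Rinv_l by lra.
    replace (2 * a * (y + 1) ^ 2 * / v ^ 2 * v ^ 3) with (2 * a * (y + 1) ^ 2 * v) by (field; lra).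
    assert (0 <= u * a * (1 + y) ) by (apply Rmult_le_pos; [apply Rmult_le_pos|]; lra).
    assert (u * a * (1 + y) <= v * a * (1 + y)) by (apply Rmult_le_compat_r; [|apply Rmult_le_compat_r]; lra).
    assert (0 <= a * v * y) by (apply Rmult_le_pos; [apply Rmult_le_pos|]; lra).
    nra. }
  assert (Hpt : 0 < Rpower t (1 - dl)) by apply rp_pos.
  enough (K : 4 * a * (y + 1) ^ 2 <= Rpower t (1 - dl)).
  { apply Rle_trans with (2 * a * (y + 1) ^ 2 / v ^ 2); auto.
    apply Rle_trans with (Rpower t (1 - dl) * / (2 * v ^ 2)).
    { unfold Rdiv. rewrite Rinv_mult. 
      apply Rle_trans with (4 * a * (y + 1) ^ 2 * (/ 2 * / v ^ 2)). right; field; lra.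
      apply Rmult_le_compat_r; auto. apply Rmult_le_pos; left; apply Rinv_0_lt_compat; lra. }
    unfold r. apply Rle_trans with (Rpower t (1 - dl) * (u / v ^ 2)); [|right; ring].
    apply Rmult_le_compat_l. lra. apply Rmult_le_reg_r with (2 * v ^ 2). lra.
    unfold Rdiv. rewrite Rinv_l by lra. field_simplify; lra. }
  clear B1 x2 Hx2 Hnum.
  destruct (Rle_dec T s) as [HsT|HsT].
  -
    assert (Hy1 : y <= 1). { unfold y. apply Rmult_le_reg_r with s; auto. unfold Rdiv.
      rewrite Rmult_assoc, Rinv_l; lra. }
    assert (HE3 : / 3 <= E). { unfold E. apply Rle_trans with (exp (- (1))).
      rewrite exp_Ropp. apply Rinv_le_contravar. apply exp_pos. apply exp_le_3.
      apply exp_le'. lra. }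
    assert (Hsa : / 6 <= s * a). { unfold a.
      assert (T*(c*E) <= s*(c*E)) by (apply Rmult_le_compat_r; nra).
      assert (T*(c*E) = /2*E) by (rewrite <- Rmult_assoc, Hc; ring). lra. }
    assert (Ht7 : / 7 <= t). { unfold t, r. 
      assert (u / v ^ 2 <= 1 / v). { apply Rmult_le_reg_r with (v ^ 2). lra.
        unfold Rdiv. rewrite Rmult_assoc, Rinv_l by lra. simpl. field_simplify; nra. }
      assert (1 / v <= 6 / 7). { apply Rmult_le_reg_r with v. lra. unfold Rdiv.
        rewrite Rmult_assoc, Rinv_l by lra. unfold v. lra. }
      lra. }
    assert (Rpower t 1 <= Rpower t (1 - dl)) by (apply rp_exp_dec; lra).
    rewrite Rpower_1 in H by lra.
    assert (a <= c) by (unfold a; nra).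
    assert (4 * a * (y + 1) ^ 2 <= 16 * c) by (simpl; nra).
    assert (16 * c <= / 7). { unfold c. apply Rmult_le_reg_r with (2 * T). lra.
      rewrite Rmult_assoc, Rinv_l by lra. lra. }
    lra.
  -
    apply Rnot_le_lt in HsT.
    assert (Hy1 : 1 < y). { unfold y. apply Rmult_lt_reg_r with s; auto. unfold Rdiv.
      rewrite Rmult_assoc, Rinv_l; lra. }
    assert (Hv32 : v <= 3 / 2). { unfold v. assert (s * a <= T * a) by (apply Rmult_le_compat_r; lra). lra. }
    assert (Ht1 : 4 / 9 * (T * a) <= t).
    { unfold t, r. assert (1 - u / v ^ 2 = (v ^ 2 - u) / v ^ 2) by (field; lra).
      rewrite H. apply Rle_trans with ((T * a) / v ^ 2).
      - apply Rmult_le_reg_r with (v ^ 2). lra.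
        replace (T * a / v ^ 2 * v ^ 2) with (T * a) by (field; lra).
        assert (v ^ 2 <= 9 / 4) by (simpl; nra). assert (0 < T * a) by nra. nra.
      - unfold Rdiv. apply Rmult_le_compat_r. left; apply Rinv_0_lt_compat; lra. unfold u. nra. }
    assert (HTa0 : 0 < T * a) by nra.
    assert (P1 : Rpower (4 / 9 * (T * a)) (1 - dl) <= Rpower t (1 - dl)) by (apply rp_base; lra).
    rewrite <- Rpower_mult_distr in P1 by lra.
    assert (P2 : Rpower (4 / 9) 1 <= Rpower (4 / 9) (1 - dl)) by (apply rp_exp_dec; lra).
    rewrite Rpower_1 in P2 by lra.
    assert (P3 : Rpower (T * a) (1 - dl) * Rpower (T * a) dl = T * a).
    { rewrite <- Rpower_plus. replace (1 - dl + dl) with 1 by ring. apply Rpower_1; lra. }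
    assert (P4 : Rpower (T * a) dl <= exp (- (dl * y))).
    { apply Rle_trans with (Rpower E dl). apply rp_base. lra. split; auto.
      unfold a. rewrite <- Rmult_assoc, Hc. lra.
      unfold Rpower, E. rewrite ln_exp. apply exp_le'. unfold y. lra. }
    pose proof (exp_neg_bound dl y ltac:(lra) ltac:(lra)) as P5.
    set (Z := Rpower (T * a) dl) in *. set (X := Rpower (T * a) (1 - dl)) in *.
    assert (HZ : 0 < Z) by apply rp_pos. assert (HX : 0 < X) by apply rp_pos.
    assert (Q1 : 36 * y ^ 2 * Z <= T).
    { assert (36 * y ^ 2 * Z <= 36 * y ^ 2 * (4 / (dl * y) ^ 2)).
      { apply Rmult_le_compat_l. nra. lra. }
      assert (36 * y ^ 2 * (4 / (dl * y) ^ 2) = 144 / dl ^ 2) by (field; lra).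
      assert (144 / dl ^ 2 <= T). { rewrite HT. unfold Rdiv. apply Rmult_le_compat_r.
        left; apply Rinv_0_lt_compat, pow_lt; lra. lra. }
      lra. }
    assert (Q2 : 36 * a * y ^ 2 * Z <= T * a) by nra.
    assert (Q3 : 16 * a * y ^ 2 <= 4 / 9 * X).
    { apply Rmult_le_reg_r with Z; auto. replace (4 / 9 * X * Z) with (4 / 9 * (T * a)) by (rewrite <- P3; ring).
      nra. }
    assert (Q4 : (y + 1) ^ 2 <= 4 * y ^ 2) by (simpl; nra).
    assert (Q5 : 4 / 9 * X <= Rpower (4 / 9) (1 - dl) * X) by (apply Rmult_le_compat_r; lra).
    nra.
Qed.

Definition phiT T s := phi0 (s / T).

Lemma phiT_pos T s : 0 < T -> 0 < s -> phiT T s = exp (- (T / s)).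
Proof.
  intros HT Hs. unfold phiT, phi0. destruct (Rle_dec (s / T) 0).
  assert (0 < s / T) by (apply Rdiv_lt_0_compat; lra). lra.
  f_equal. f_equal. field. lra.
Qed.

Lemma phiT_nonpos T s : 0 < T -> s <= 0 -> phiT T s = 0.
Proof.
  intros HT Hs. unfold phiT, phi0. destruct (Rle_dec (s / T) 0). auto.
  exfalso. apply n. unfold Rdiv. assert (0 < / T) by (apply Rinv_0_lt_compat; lra). nra.
Qed.

Lemma phiT_ge0 T s : 0 < T -> 0 <= phiT T s.
Proof.
  intros HT. destruct (Rle_dec s 0). rewrite phiT_nonpos; auto; lra.
  rewrite phiT_pos; [left; apply exp_pos|auto|lra].
Qed.

Lemma phiT_Cn T n : 0 < T -> Cn (fun _ => True) n (phiT T).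
Proof.
  intros HT. unfold phiT.
  apply (Cn_comp _ (fun _ => True)); auto using openT.
  apply phi0_smooth.
  apply (Cn_ext _ n (fun s => s * / T)). apply openT. intros; reflexivity.
  apply Cn_mult. apply openT. apply Cn_id, openT. apply Cn_const, openT.
Qed.

Definition xiF T s := s / (1 + s * / (2 * T) * phiT T s).

Lemma xi_den_pos T s : 0 < T -> 0 < 1 + s * / (2 * T) * phiT T s.
Proof.
  intros HT. destruct (Rle_dec s 0). rewrite phiT_nonpos; auto; lra.
  assert (0 < / (2 * T)) by (apply Rinv_0_lt_compat; lra).
  pose proof (phiT_ge0 T s HT). assert (0 <= s * / (2 * T)) by nra. nra.
Qed.

Lemma xi_Cn T n : 0 < T -> Cn (fun _ => True) n (xiF T).
Proof.
  intros HT. unfold xiF, Rdiv. apply Cn_mult. apply openT. apply Cn_id, openT.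
  apply (Cn_comp _ (fun x => 0 < x)); auto using openT, openPos.
  intros x _; apply xi_den_pos; auto.
  apply Cn_inv.
  apply Cn_plus. apply openT. apply Cn_const, openT.
  apply Cn_mult. apply openT. apply Cn_mult. apply openT. apply Cn_id, openT. apply Cn_const, openT.
  apply phiT_Cn; auto.
Qed.

Definition xF T s := s / (1 + s * / (2 * T) * exp (- (T / s))).
Definition xF1 T s := let a := / (2 * T) * exp (- (T / s)) in
   (1 - T * a) / (1 + s * a) ^ 2.
Definition xF2 T s := let a := / (2 * T) * exp (- (T / s)) in
   let u := 1 - T * a in let v := 1 + s * a in
   - (T ^ 2 * a * v / s ^ 2 + 2 * u * a * (1 + T / s)) / v ^ 3.

Lemma xF_der T s : 0 < T -> 0 < s -> is_derive (xF T) s (xF1 T s).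
Proof.
  intros HT Hs. unfold xF, xF1.
  assert (0 < / (2 * T) * exp (- (T / s))) by (apply Rmult_lt_0_compat; [apply Rinv_0_lt_compat; lra|apply exp_pos]).
  assert (HE : 0 < exp (- (T * / s))) by apply exp_pos.
  assert (Hc : 0 < / (2 * T)) by (apply Rinv_0_lt_compat; lra).
  assert (0 < s * / (2 * T) * exp (- (T * / s))) by (repeat apply Rmult_lt_0_compat; lra).
  auto_derive.
  { repeat split; try lra. }
  change (T / s) with (T * / s). set (E := exp (- (T * / s))) in *.
  assert (0 < s * E) by (apply Rmult_lt_0_compat; lra).
  field. repeat split; try lra.
Qed.

Lemma xF1_der T s : 0 < T -> 0 < s -> is_derive (xF1 T) s (xF2 T s).
Proof.
  intros HT Hs. unfold xF1, xF2.
  assert (0 < / (2 * T) * exp (- (T / s))) by (apply Rmult_lt_0_compat; [apply Rinv_0_lt_compat; lra|apply exp_pos]).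
  assert (HE : 0 < exp (- (T * / s))) by apply exp_pos.
  assert (Hc : 0 < / (2 * T)) by (apply Rinv_0_lt_compat; lra).
  assert (0 < s * / (2 * T) * exp (- (T * / s))) by (repeat apply Rmult_lt_0_compat; lra).
  auto_derive.
  { assert (0 < s * (/ (2 * T) * exp (- (T * / s)))) by nra. repeat split; try lra; apply Rgt_not_eq; repeat apply Rmult_lt_0_compat; lra. }
  change (T / s) with (T * / s). set (E := exp (- (T * / s))) in *.
  assert (0 < s * E) by (apply Rmult_lt_0_compat; lra).
  field. repeat split; try lra.
Qed.

Lemma xi_eq T s : 0 < T -> 0 < s -> xiF T s = xF T s.
Proof. intros. unfold xiF, xF. rewrite phiT_pos; auto. Qed.

Lemma xi_D1 T s : 0 < T -> 0 < s -> Derive (xiF T) s = xF1 T s.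
Proof.
  intros HT Hs. rewrite (Derive_ext_loc (xiF T) (xF T)).
  apply is_derive_unique, xF_der; auto.
  apply (openS_loc (fun x => 0 < x) s); [apply openPos | auto |]. intros; apply xi_eq; auto.
Qed.

Lemma xi_isD1 T s : 0 < T -> 0 < s -> is_derive (xiF T) s (xF1 T s).
Proof.
  intros HT Hs. apply (is_derive_ext_loc (xF T)). 
  apply (openS_loc (fun x => 0 < x) s); [apply openPos | auto |]. intros; symmetry; apply xi_eq; auto.
  apply xF_der; auto.
Qed.

Lemma xi_D2 T s : 0 < T -> 0 < s -> Derive_n (xiF T) 2 s = xF2 T s.
Proof.
  intros HT Hs. change (Derive_n (xiF T) 2 s) with (Derive (fun x => Derive (xiF T) x) s).
  rewrite (Derive_ext_loc _ (xF1 T)).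
  apply is_derive_unique, xF1_der; auto.
  apply (openS_loc (fun x => 0 < x) s); [apply openPos | auto |]. intros; apply xi_D1; auto.
Qed.

Lemma xi_lim T : 0 < T -> is_lim (xiF T) p_infty (2 * T).
Proof.
  intros HT. set (c := / (2 * T)).
  assert (Hc : 0 < c) by (unfold c; apply Rinv_0_lt_compat; lra).
  assert (L1 : is_lim (fun s => / s) p_infty 0).
  { apply (is_lim_inv (fun y => y) p_infty p_infty). apply is_lim_id. discriminate. }
  assert (L2 : is_lim (fun s => - (T * / s)) p_infty 0).
  { assert (H := is_lim_opp _ _ _ (is_lim_scal_l _ T _ _ L1)). simpl in H.
    replace (- (T * 0)) with 0 in H by ring. exact H. }
  assert (L3 : is_lim (fun s => exp (- (T * / s))) p_infty 1).
  { rewrite <- exp_0. apply (is_lim_comp exp (fun s => - (T * / s)) p_infty (exp 0) 0).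
    apply is_lim_continuity. apply derivable_continuous_pt, derivable_pt_exp.
    exact L2. exists 0. intros y Hy. assert (0 < T * / y) by (apply Rmult_lt_0_compat; [lra| apply Rinv_0_lt_compat; lra]). intro E; injection E; lra. }
  assert (L4 : is_lim (fun s => / s + c * exp (- (T * / s))) p_infty c).
  { apply (is_lim_scal_l _ c p_infty 1) in L3. simpl in L3.
    assert (H := is_lim_plus' _ _ p_infty 0 (c * 1) L1 L3).
    replace (0 + c * 1) with c in H by ring. exact H. }
  apply (is_lim_ext_loc (fun s => / (/ s + c * exp (- (T * / s))))).
  { exists 0. intros y Hy. unfold xiF. rewrite phiT_pos by lra. fold c.
    change (T / y) with (T * / y). pose proof (exp_pos (- (T * / y))).
    assert (0 < y * c * exp (- (T * / y))) by (repeat apply Rmult_lt_0_compat; lra).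
    field. split; lra. }
  replace (2 * T) with (/ c) by (unfold c; field; lra).
  apply (is_lim_inv _ p_infty c) in L4. exact L4. intro H. injection H. lra.
Qed.

Lemma xi_nonpos T s : 0 < T -> s <= 0 -> xiF T s = s.
Proof. intros. unfold xiF. rewrite phiT_nonpos by auto.
  rewrite Rmult_0_r, Rplus_0_r. unfold Rdiv. rewrite Rinv_1. ring. Qed.

Lemma partb (m : nat) (beta : R) : (2 < m)%nat -> 0 < beta < 1 ->
  (exists xi : R -> R,
      smooth_on xi (fun _ => True) /\
      (forall s, s <= 0 -> xi s = s) /\
      (exists M : R, 0 < M /\
         (forall x y, x < y -> xi x < xi y) /\
         is_lim xi p_infty M) /\
      (forall s, 0 < s ->
         0 < Derive xi s < 1 /\ Derive_n xi 2 s <= 0 /\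
         (INR m - 2) / INR m *
           rpow (- Derive_n xi 2 s /
                 rpow (Derive xi s - (Derive xi s) ^ m) (2 / INR m))
                (INR m / (INR m - 2))
         <= rpow (1 - Derive xi s) beta)).
Proof.
  intros Hm Hb. pose proof (gam_bounds m beta Hm Hb) as [Hg1 Hg2].
  pose proof (INR_ge3 m Hm).
  set (dl := 1 - gam m beta).
  assert (Hdl : 0 < dl <= 1). { unfold dl. split. lra.
    assert (0 < 2 / INR m) by (apply Rdiv_lt_0_compat; lra). lra. }
  set (T := 200 / dl ^ 2).
  assert (HT : 0 < T) by (unfold T; apply Rdiv_lt_0_compat; [lra| apply pow_lt; lra]).
  assert (KEY : forall s, 0 < s -> 0 < xF1 T s < 1 /\ xF2 T s <= 0 /\
     - xF2 T s <= xF1 T s * Rpower (1 - xF1 T s) (1 - dl)).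
  { intros s Hs. exact (ineq_b dl T s Hdl eq_refl Hs). }
  exists (xiF T). split; [|split; [|split]].
  - intros n x _. apply (xi_Cn T n HT n x); auto.
  - intros s Hs. apply xi_nonpos; auto.
  - exists (2 * T). split. lra. split; [|apply xi_lim; auto].
    intros x y Hxy. destruct (Rle_dec y 0).
    + rewrite !xi_nonpos by lra. lra.
    + destruct (Rle_dec x 0).
      * assert (xiF T x = x) by (apply xi_nonpos; lra).
        assert (0 < xiF T y). { unfold xiF. apply Rdiv_lt_0_compat. lra. apply xi_den_pos; auto. }
        lra.
      * apply (incr_function (xiF T) 0 p_infty (xF1 T)); simpl; auto; try lra.
        intros z Hz _. apply xi_isD1; auto.
        intros z Hz _. apply KEY; auto.
  - intros s Hs. rewrite xi_D1, xi_D2 by auto.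
    destruct (KEY s Hs) as [K1 [K2 K3]].
    split; auto. split; auto.
    apply red_b; auto. replace (gam m beta) with (1 - dl) by (unfold dl; ring). auto.
Qed.

Lemma exp_neg_bound4 d y : 0 < d -> 0 < y -> exp (- (d * y)) <= 256 / (d * y) ^ 4.
Proof.
  intros Hd Hy. pose proof (pow_le_exp (d * y) 4 ltac:(nra)) as H.
  replace (INR 4) with 4 in H by (simpl; ring).
  replace (exp (- (d * y))) with (/ exp (d * y)) by (rewrite exp_Ropp; auto).
  pose proof (exp_pos (d * y)). assert (0 < (d * y) ^ 4) by (apply pow_lt; nra).
  apply Rmult_le_reg_r with (exp (d * y) * (d * y) ^ 4). nra.
  field_simplify; try lra. 
Qed.

Lemma ineq_a dl T s : 0 < dl <= 1 -> T = 10240 / dl ^ 4 -> 0 < s < T / 2 ->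
  let P := exp 2 * exp (- (T / s)) in
  let p := 2 * (P * T / s ^ 2) / (1 - P) in
  let q := 2 * (P * (T ^ 2 / s ^ 4 - 2 * T / s ^ 3)) / (1 - P) + 2 * (P * T / s ^ 2) ^ 2 / (1 - P) ^ 2 in
  0 < p /\ 0 <= q /\ q <= Rpower p (1 - dl) + p ^ 2.
Proof.
  intros Hd HT Hs P p q.
  assert (HT1 : 10240 <= T). { rewrite HT. apply Rmult_le_reg_r with (dl ^ 4). apply pow_lt; lra.
    unfold Rdiv. rewrite Rmult_assoc, Rinv_l. 2: { apply pow_nonzero; lra. }
    assert (dl ^ 4 <= 1) by (rewrite <- (pow1 4); apply pow_incr; lra). nra. }
  set (y := T / s) in *.
  assert (Hy : 2 < y). { unfold y. apply Rmult_lt_reg_r with s. lra. unfold Rdiv.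
    rewrite Rmult_assoc, Rinv_l; lra. }
  assert (HP : P = exp (2 - y)) by (unfold P; rewrite <- exp_plus; f_equal; ring).
  assert (HP1 : 0 < P < 1). { rewrite HP. split. apply exp_pos. rewrite <- exp_0. apply exp_increasing. lra. }
  set (X := P * T / s ^ 2).
  assert (HX : X = P * y ^ 2 / T) by (unfold X, y; field; lra).
  set (Y := P * (T ^ 2 / s ^ 4 - 2 * T / s ^ 3)).
  assert (HY : Y = P * y ^ 3 * (y - 2) / T ^ 2) by (unfold Y, y; field; lra).
  assert (HX0 : 0 < X) by (rewrite HX; apply Rdiv_lt_0_compat; [apply Rmult_lt_0_compat; [lra| apply pow_lt; lra]|lra]).
  assert (HY0 : 0 <= Y) by (rewrite HY; apply Rdiv_le_0_compat; [apply Rmult_le_pos; [apply Rmult_le_pos; [lra| apply pow_le; lra]|lra]| apply pow_lt; lra]).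
  assert (Hp : p = 2 * X / (1 - P)) by reflexivity.
  assert (Hq : q = 2 * Y / (1 - P) + 2 * X ^ 2 / (1 - P) ^ 2) by reflexivity.
  assert (Hp0 : 0 < p) by (rewrite Hp; apply Rdiv_lt_0_compat; lra).
  assert (H1P : 0 < 1 - P) by lra.
  assert (HYq : 0 <= 2 * Y / (1 - P)) by (apply Rdiv_le_0_compat; lra).
  assert (HXq : 0 <= 2 * X ^ 2 / (1 - P) ^ 2) by (apply Rdiv_le_0_compat; [nra| apply pow_lt; lra]).
  assert (Hq0 : 0 <= q) by lra.
  split; auto. split; auto.
  assert (Hp2 : p ^ 2 = 4 * X ^ 2 / (1 - P) ^ 2) by (rewrite Hp; field; lra).
  pose proof (rp_pos p (1 - dl)) as Hpg.
  assert (HYb : Y <= P * y ^ 4 / T ^ 2).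
  { rewrite HY. unfold Rdiv. apply Rmult_le_compat_r. left; apply Rinv_0_lt_compat, pow_lt; lra.
    assert (0 < P * y ^ 3) by (apply Rmult_lt_0_compat; [lra|apply pow_lt; lra]).
    replace (P * y ^ 4) with (P * y ^ 3 * y) by ring. nra. }
  destruct (Rle_dec (/ 2) P).
  -
    assert (Y * (1 - P) <= X ^ 2).
    { rewrite HX. apply Rle_trans with (P * y ^ 4 / T ^ 2 * (1 - P)).
      apply Rmult_le_compat_r; lra.
      replace ((P * y ^ 2 / T) ^ 2) with (P * y ^ 4 / T ^ 2 * P) by (field; lra).
      apply Rmult_le_compat_l. apply Rdiv_le_0_compat. apply Rmult_le_pos; [lra|apply pow_le; lra].
      apply pow_lt; lra. lra. }
    assert (2 * Y / (1 - P) <= 2 * X ^ 2 / (1 - P) ^ 2).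
    { apply Rmult_le_reg_r with ((1 - P) ^ 2). apply pow_lt; lra.
      replace (2 * Y / (1 - P) * (1 - P) ^ 2) with (2 * (Y * (1 - P))) by (field; lra).
      replace (2 * X ^ 2 / (1 - P) ^ 2 * (1 - P) ^ 2) with (2 * X ^ 2) by (field; lra). lra. }
    lra.
  -
    apply Rnot_le_lt in n.
    assert (S1 : 2 * Y / (1 - P) <= 4 * Y).
    { apply Rmult_le_reg_r with (1 - P). lra.
      replace (2 * Y / (1 - P) * (1 - P)) with (2 * Y) by (field; lra). nra. }
    assert (S2 : 2 * X ^ 2 / (1 - P) ^ 2 <= p ^ 2) by (rewrite Hp2; unfold Rdiv; nra).
    assert (S3 : X <= p). { rewrite Hp. apply Rmult_le_reg_r with (1 - P). lra.
      replace (2 * X / (1 - P) * (1 - P)) with (2 * X) by (field; lra). nra. }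
    assert (S4 : Rpower X (1 - dl) <= Rpower p (1 - dl)) by (apply rp_base; lra).
    enough (K : 4 * Y <= Rpower X (1 - dl)) by lra.
    (* 4 Y <= 4 P y^4/T^2 = 4 X y^2 / T ; X^(1-dl) = X / X^dl *)
    assert (P3 : Rpower X (1 - dl) * Rpower X dl = X).
    { rewrite <- Rpower_plus. replace (1 - dl + dl) with 1 by ring. apply Rpower_1; lra. }
    set (Z := Rpower X dl) in *. set (W := Rpower X (1 - dl)) in *.
    assert (HZ : 0 < Z) by apply rp_pos.
    assert (Z1 : Z <= 10 * y ^ 2 * exp (- (dl * y))).
    { assert (EX : X = (exp 2 * y ^ 2 / T) * exp (- y)).
      { rewrite HX, HP. unfold Rminus. rewrite exp_plus. field. lra. }
      unfold Z. rewrite EX. rewrite <- Rpower_mult_distr.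
      2: { apply Rdiv_lt_0_compat. apply Rmult_lt_0_compat. apply exp_pos. apply pow_lt; lra. lra. }
      2: apply exp_pos.
      assert (R1 : Rpower (exp (- y)) dl = exp (- (dl * y))).
      { unfold Rpower. rewrite ln_exp. f_equal. ring. }
      rewrite R1.
      assert (R2 : Rpower (exp 2 * y ^ 2 / T) dl <= 1 + exp 2 * y ^ 2 / T).
      { apply rp_le_1plus. apply Rdiv_lt_0_compat. apply Rmult_lt_0_compat. apply exp_pos. apply pow_lt; lra. lra. lra. }
      assert (R3 : exp 2 <= 9). { replace 2 with (1 + 1) by ring. rewrite exp_plus.
        pose proof exp_le_3. pose proof (exp_pos 1). nra. }
      assert (R4 : exp 2 * y ^ 2 / T <= 9 * y ^ 2).
      { apply Rmult_le_reg_r with T. lra. replace (exp 2 * y ^ 2 / T * T) with (exp 2 * y ^ 2) by (field; lra).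
        assert (0 <= y ^ 2) by (apply pow_le; lra). nra. }
      assert (R5 : 1 <= y ^ 2) by (simpl; nra).
      apply Rmult_le_compat_r. left; apply exp_pos. lra. }
    pose proof (exp_neg_bound4 dl y ltac:(lra) ltac:(lra)) as Z2.
    assert (Z3 : 4 * y ^ 2 * Z <= T).
    { apply Rle_trans with (4 * y ^ 2 * (10 * y ^ 2 * (256 / (dl * y) ^ 4))).
      apply Rmult_le_compat_l. simpl; nra.
      apply Rle_trans with (10 * y ^ 2 * exp (- (dl * y))); auto.
      apply Rmult_le_compat_l. simpl; nra. auto.
      right. rewrite HT. field. lra. }
    assert (Z4 : 4 * Y <= 4 * X * y ^ 2 / T).
    { rewrite HX. apply Rle_trans with (4 * (P * y ^ 4 / T ^ 2)). lra. right. field. lra. }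
    assert (Z5 : 4 * X * y ^ 2 / T * Z <= X).
    { replace (4 * X * y ^ 2 / T * Z) with (X * (4 * y ^ 2 * Z) / T) by (field; lra).
      apply Rmult_le_reg_r with T. lra.
      replace (X * (4 * y ^ 2 * Z) / T * T) with (X * (4 * y ^ 2 * Z)) by (field; lra). nra. }
    assert (4 * X * y ^ 2 / T <= W).
    { apply Rmult_le_reg_r with Z; auto. lra. }
    lra.
Qed.

Definition psiT T s := exp 2 * phiT T s.
Definition chiF T s := -2 * ln (1 - psiT T s).

Lemma openLt b : openS (fun s => s < b).
Proof. intros x Hx. exists (b - x). split. lra. intros y Hy. apply Rabs_def2 in Hy. lra. Qed.

Lemma openBand b : openS (fun s => 0 < s < b).
Proof. intros x Hx. exists (Rmin x (b - x)). split. apply Rmin_glb_lt; lra.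
  intros y Hy. apply Rabs_def2 in Hy. pose proof (Rmin_l x (b - x)). pose proof (Rmin_r x (b - x)). lra. Qed.

Lemma psi_pos_eq T s : 0 < T -> 0 < s -> psiT T s = exp (2 - T / s).
Proof. intros. unfold psiT. rewrite phiT_pos by auto. rewrite <- exp_plus. f_equal. Qed.

Lemma psi_lt1 T s : 0 < T -> s < T / 2 -> psiT T s < 1.
Proof.
  intros HT Hs. destruct (Rle_dec s 0).
  - unfold psiT. rewrite phiT_nonpos by auto. lra.
  - rewrite psi_pos_eq by lra. rewrite <- exp_0. apply exp_increasing.
    assert (2 < T / s). { apply Rmult_lt_reg_r with s. lra. unfold Rdiv.
      rewrite Rmult_assoc, Rinv_l; lra. } lra.
Qed.

Lemma chi_Cn T n : 0 < T -> Cn (fun s => s < T / 2) n (chiF T).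
Proof.
  intros HT. unfold chiF. apply Cn_mult. apply openLt. apply Cn_const, openLt.
  apply (Cn_comp _ (fun x => 0 < x)). apply openLt. apply openPos.
  intros x Hx. pose proof (psi_lt1 T x HT Hx). lra.
  apply Cn_ln.
  apply (Cn_sub (fun _ => True)). auto.
  apply (Cn_ext _ n (fun s => 1 + (-1) * (exp 2 * phiT T s))). apply openT.
  intros; unfold psiT; ring.
  apply Cn_plus. apply openT. apply Cn_const, openT. apply Cn_mult. apply openT.
  apply Cn_const, openT. apply Cn_mult. apply openT. apply Cn_const, openT. apply phiT_Cn; auto.
Qed.

Definition cF T s := -2 * ln (1 - exp 2 * exp (- (T / s))).
Definition cF1 T s := let P := exp 2 * exp (- (T / s)) in 2 * (P * T / s ^ 2) / (1 - P).
Definition cF2 T s := let P := exp 2 * exp (- (T / s)) in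
  2 * (P * (T ^ 2 / s ^ 4 - 2 * T / s ^ 3)) / (1 - P) + 2 * (P * T / s ^ 2) ^ 2 / (1 - P) ^ 2.

Lemma P_lt1 T s : 0 < T -> 0 < s < T / 2 -> exp 2 * exp (- (T * / s)) < 1.
Proof.
  intros HT Hs. pose proof (psi_lt1 T s HT ltac:(lra)). rewrite psi_pos_eq in H by lra.
  rewrite <- exp_plus. exact H.
Qed.

Lemma cF_der T s : 0 < T -> 0 < s < T / 2 -> is_derive (cF T) s (cF1 T s).
Proof.
  intros HT Hs. unfold cF, cF1. pose proof (P_lt1 T s HT Hs).
  auto_derive. { repeat split; try lra; apply Rgt_not_eq; repeat apply Rmult_lt_0_compat; lra. }
  change (T / s) with (T * / s). set (E := exp (- (T * / s))) in *.
  field. repeat split; lra.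
Qed.

Lemma cF1_der T s : 0 < T -> 0 < s < T / 2 -> is_derive (cF1 T) s (cF2 T s).
Proof.
  intros HT Hs. unfold cF1, cF2. pose proof (P_lt1 T s HT Hs).
  auto_derive. { repeat split; try lra; apply Rgt_not_eq; repeat apply Rmult_lt_0_compat; lra. }
  change (T / s) with (T * / s). set (E := exp (- (T * / s))) in *.
  field. repeat split; lra.
Qed.

Lemma chi_eq T s : 0 < T -> 0 < s -> chiF T s = cF T s.
Proof. intros. unfold chiF, cF, psiT. rewrite phiT_pos; auto. Qed.

Lemma chi_D1 T s : 0 < T -> 0 < s < T / 2 -> Derive (chiF T) s = cF1 T s.
Proof.
  intros HT Hs. rewrite (Derive_ext_loc (chiF T) (cF T)).
  apply is_derive_unique, cF_der; auto.
  apply (openS_loc (fun x => 0 < x < T / 2) s); [apply openBand | auto |].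
  intros; apply chi_eq; lra.
Qed.

Lemma chi_D2 T s : 0 < T -> 0 < s < T / 2 -> Derive_n (chiF T) 2 s = cF2 T s.
Proof.
  intros HT Hs. change (Derive_n (chiF T) 2 s) with (Derive (fun x => Derive (chiF T) x) s).
  rewrite (Derive_ext_loc _ (cF1 T)).
  apply is_derive_unique, cF1_der; auto.
  apply (openS_loc (fun x => 0 < x < T / 2) s); [apply openBand | auto |].
  intros; apply chi_D1; auto.
Qed.

Lemma chi_nonpos T s : 0 < T -> s <= 0 -> chiF T s = 0.
Proof. intros. unfold chiF, psiT. rewrite phiT_nonpos by auto.
  rewrite Rmult_0_r, Rminus_0_r, ln_1. ring. Qed.

Lemma chi_lim T : 0 < T -> filterlim (chiF T) (at_left (T / 2)) (Rbar_locally p_infty).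
Proof.
  intros HT P [M HM]. set (b := T / 2).
  set (eta := exp (- (Rabs M / 2) - 1)).
  assert (Heta : 0 < eta) by apply exp_pos.
  assert (Hc : continuous (fun s => exp (2 - T / s)) b).
  { apply (@ex_derive_continuous R_AbsRing R_NormedModule). auto_derive. unfold b. lra. }
  assert (Hb : exp (2 - T / b) = 1) by (unfold b; replace (2 - T / (T / 2)) with 0 by (field; lra); apply exp_0).
  unfold continuous in Hc. rewrite Hb in Hc.
  assert (L1 := Hc (ball 1 (mkposreal eta Heta)) (locally_ball 1 (mkposreal eta Heta))).
  assert (L2 : locally b (fun s => 0 < s)).
  { apply (openS_loc (fun x => 0 < x) b); [apply openPos| unfold b; lra| auto]. }
  unfold filtermap, at_left, within. unfold filtermap in L1. simpl in L1.
  assert (L := filter_and _ _ L1 L2). eapply filter_imp; [|exact L].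
  intros s [Hs1 Hs2] Hsb. apply HM.
  change (Rabs (exp (2 - T / s) - 1) < eta) in Hs1. apply Rabs_def2 in Hs1.
  rewrite <- psi_pos_eq in Hs1 by auto.
  assert (Hp1 : psiT T s < 1) by (apply psi_lt1; auto).
  assert (Hl : ln (1 - psiT T s) < ln eta) by (apply ln_increasing; lra).
  unfold eta in Hl. rewrite ln_exp in Hl. unfold chiF.
  pose proof (Rle_abs M). lra.
Qed.

Lemma parta (m : nat) (beta : R) : (2 < m)%nat -> 0 < beta < 1 ->
  (exists (b : R) (chi : R -> R),
      0 < b /\
      smooth_on chi (fun s => s < b) /\
      (forall s, s <= 0 -> chi s = 0) /\
      filterlim chi (at_left b) (Rbar_locally p_infty) /\
      (forall s, 0 < s < b ->
         0 < Derive chi s /\ 0 <= Derive_n chi 2 s /\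
         (INR m - 2) / INR m *
           rpow (Derive_n chi 2 s /
                 rpow ((1 + Derive chi s) ^ m - (1 + Derive chi s)) (2 / INR m))
                (INR m / (INR m - 2))
         <= rpow (Derive chi s) beta)).
Proof.
  intros Hm Hb. pose proof (gam_bounds m beta Hm Hb) as [Hg1 Hg2].
  pose proof (INR_ge3 m Hm).
  set (dl := 1 - gam m beta).
  assert (Hdl : 0 < dl <= 1). { unfold dl. split. lra.
    assert (0 < 2 / INR m) by (apply Rdiv_lt_0_compat; lra). lra. }
  set (T := 10240 / dl ^ 4).
  assert (HT : 0 < T) by (unfold T; apply Rdiv_lt_0_compat; [lra| apply pow_lt; lra]).
  exists (T / 2), (chiF T). split; [lra|]. split; [|split; [|split]].
  - intros n x Hx. apply (chi_Cn T n HT n x); auto.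
  - intros s Hs. apply chi_nonpos; auto.
  - apply chi_lim; auto.
  - intros s Hs. rewrite chi_D1, chi_D2 by auto.
    destruct (ineq_a dl T s Hdl eq_refl Hs) as [K1 [K2 K3]].
    split; auto. split; auto.
    apply red_a; auto. replace (gam m beta) with (1 - dl) by (unfold dl; ring). auto.
Qed.

Theorem proposition3p6 (m : nat) (beta : R) :
  (2 < m)%nat -> 0 < beta < 1 ->
  (* (a) *)
  (exists (b : R) (chi : R -> R),
      0 < b /\
      smooth_on chi (fun s => s < b) /\
      (forall s, s <= 0 -> chi s = 0) /\
      filterlim chi (at_left b) (Rbar_locally p_infty) /\
      (forall s, 0 < s < b ->
         0 < Derive chi s /\ 0 <= Derive_n chi 2 s /\
         (INR m - 2) / INR m *
           rpow (Derive_n chi 2 s /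
                 rpow ((1 + Derive chi s) ^ m - (1 + Derive chi s)) (2 / INR m))
                (INR m / (INR m - 2))
         <= rpow (Derive chi s) beta)) /\
  (* (b) *)
  (exists xi : R -> R,
      smooth_on xi (fun _ => True) /\
      (forall s, s <= 0 -> xi s = s) /\
      (exists M : R, 0 < M /\
         (forall x y, x < y -> xi x < xi y) /\
         is_lim xi p_infty M) /\
      (forall s, 0 < s ->
         0 < Derive xi s < 1 /\ Derive_n xi 2 s <= 0 /\
         (INR m - 2) / INR m *
           rpow (- Derive_n xi 2 s /
                 rpow (Derive xi s - (Derive xi s) ^ m) (2 / INR m))
                (INR m / (INR m - 2))
         <= rpow (1 - Derive xi s) beta)).
Proof.
  intros Hm Hb. split. apply parta; auto. apply partb; auto.
Qed.
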